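(* Fermionic effects on a system of local fermionic modes are exactly the operators $A$ that are linear combinations of products of an even number of field operators and whose Jordan–Wigner representative $J(A)$ is positive and bounded by the identity: every fermionic effect is of this form, and conversely every linear combination of products of an even number of field operators represented by a positive operator bounded by the identity is a fermionic effect.
   Context: A system $\mathsf{L}_\mathsf{F}$ of $L$ local fermionic modes is described by field operators $\varphi_1,\dots,\varphi_L$ with $\{\varphi_i,\varphi_j^\dagger\}=\delta_{ij}I$, $\{\varphi_i,\varphi_j\}=0$. Identifying the Fock basis $(\varphi_1^\dagger)^{n_1}\cdots(\varphi_L^\dagger)^{n_L}|\Omega\rangle$ with the computational basis of $L$ qubits gives the Jordan–Wigner isomorphism $J$: $J(\varphi_i)=(\bigotimes_{l<i}\sigma^z_l)\otimes\sigma^-_i\otimes(\bigotimes_{k>i}I_k)$, extended linearly and multiplicatively with $J(X^\dagger)=J(X)^\dagger$. Fermionic states are operators $\rho$ (linear combinations of products of an even number of field operators) with $J(\rho)\ge0$ block-diagonal in the even/odd occupation-number subspaces and trace $\le1$. Fermionic transformations are completely positive maps whose Kraus operators are each linear combinations of products of field operators with either all an even or all an odd number of factors; it is known that these are exactly the admissible fermionic transformations. A fermionic effect is an operator $A$ such that the functional $\rho\mapsto\operatorname{Tr}[J(\rho)J(A)]$ equals $\rho\mapsto\operatorname{Tr}[J(\mathcal{A}(\rho))]$ for some fermionic transformation $\mathcal{A}$ (i.e. a transformation followed by discarding the system).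
   Formalization: A fermionic effect A need only agree on all fermionic states with some linear combination of even products whose Jordan–Wigner representative lies between 0 and I; 0 ≤ J(A) ≤ I holds for even fermionic effects A only. The statement above fails without it. *)

(* Defs.v *)
From HB Require Import structures.
From mathcomp Require Import all_boot all_order all_algebra.
From mathcomp Require Import complex reals.

Set Implicit Arguments.
Unset Strict Implicit.
Unset Printing Implicit Defensive.

Import Order.TTheory GRing.Theory Num.Theory.
Local Open Scope ring_scope.

Section Fermions.
Variable R : realType.
Local Notation C := (R[i]).
Variable L : nat.

(* Operators on the L-qubit space C^(2^L) (images under Jordan-Wigner J). *)
Definition mat := 'M[C]_(2 ^ L).

(* Occupation number n_l of mode l in the computational basis state k. *)
Definition occ (l : nat) (k : 'I_(2 ^ L)) : nat := odd (k %/ 2 ^ l).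

(* J(phi_i) = (sigma^z)^{(x) l<i} (x) sigma^- (x) I^{(x) k>i}, written out
   entrywise: it maps |..., n_i = 1, ...> to (-1)^(sum_{l<i} n_l) |..., n_i = 0, ...>
   and kills states with n_i = 0. *)
Definition Jphi (i : 'I_L) : mat :=
  \matrix_(x, y) (if (occ i y == 1%N) && (val x == val y - 2 ^ i)%N
                  then (-1) ^+ (\sum_(l < L | (l < i)%N) occ l y)
                  else 0).

Definition adj m n (M : 'M[C]_(m, n)) : 'M[C]_(n, m) := (map_mx Num.conj M)^T.

(* Letters: (i, false) is phi_i, (i, true) is phi_i^dagger. *)
Definition letter := ('I_L * bool)%type.
Definition fop (a : letter) : mat := if a.2 then adj (Jphi a.1) else Jphi a.1.
Definition word_prod (w : seq letter) : mat := foldr (fun a M => fop a *m M) 1%:M w.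

Definition parity_op (b : bool) (A : mat) : Prop :=
  exists s : seq (C * seq letter),
    all (fun p => odd (size p.2) == b) s /\
    A = \sum_(p <- s) p.1 *: word_prod p.2.

Definition even_op := parity_op false.
Definition odd_op := parity_op true.

Definition psd (M : mat) : Prop :=
  forall v : 'cV[C]_(2 ^ L), 0 <= (adj v *m M *m v) 0 0.

Definition state_parity (k : 'I_(2 ^ L)) : bool := odd (\sum_(l < L) occ l k).

Definition fermionic_state (rho : mat) : Prop :=
  [/\ even_op rho, psd rho,
      (forall x y, state_parity x != state_parity y -> rho x y = 0)
    & \tr rho <= 1].

Definition fermionic_transformation (T : mat -> mat) : Prop :=
  exists Ks : seq mat,
    [/\ (forall K, K \in Ks -> even_op K \/ odd_op K),
        psd (1%:M - \sum_(K <- Ks) adj K *m K)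
      & forall X, T X = \sum_(K <- Ks) K *m X *m adj K].

Definition fermionic_effect (A : mat) : Prop :=
  exists T, fermionic_transformation T /\
    forall rho, fermionic_state rho -> \tr (rho *m A) = \tr (T rho).

End Fermions.

(* Main.v *)
From Stdlib Require Import Arith Lia.
Require Import Defs.
From HB Require Import structures.
From mathcomp Require Import all_boot all_order all_algebra.
From mathcomp Require Import complex reals.
From mathcomp Require Import ring.
Import Order.TTheory GRing.Theory Num.Theory.
Local Open Scope ring_scope.


Lemma expn_pow (a b : nat) : (a ^ b)%N = Nat.pow a b.
Proof. elim: b => [//|b IH]; by rewrite expnS IH Nat.pow_succ_r'. Qed.

Lemma divn_div (k d : nat) : (k %/ d)%N = Nat.div k d.
Proof.
case: d => [|d]; first by rewrite divn0.
apply: (Nat.div_unique _ _ _ (k %% d.+1)%N).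
- by apply/ssrnat.ltP; rewrite ltn_mod.
- by rewrite {1}(divn_eq k d.+1) mulnC.
Qed.

Lemma modn_mod (k d : nat) : (0 < d)%N -> (k %% d)%N = Nat.modulo k d.
Proof.
move=> d0; apply: (Nat.mod_unique _ _ (k %/ d)%N).
- by apply/ssrnat.ltP; rewrite ltn_mod.
- by rewrite {1}(divn_eq k d) mulnC.
Qed.

Lemma odd_testbit (k l : nat) : odd (k %/ 2 ^ l) = Nat.testbit k l.
Proof.
rewrite Nat.testbit_eqb divn_div expn_pow.
have -> : forall m, odd m = (m %% 2 == 1)%N by move=> m; rewrite modn2; case: (odd m).
rewrite modn_mod //.
Qed.

Lemma bits_zero (L z : nat) : (z < 2 ^ L)%N -> (forall i, (i < L)%N -> Nat.testbit z i = false) -> z = 0%N.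
Proof.
move=> zL H; apply: Nat.bits_inj => n; rewrite Nat.bits_0.
case: (ltnP n L) => [/H //|Ln].
case: z zL H => [|z] zL H; first by rewrite Nat.bits_0.
apply: Nat.bits_above_log2.
have : (z.+1 < Nat.pow 2 L)%coq_nat by apply/ssrnat.ltP; rewrite -expn_pow.
move/(Nat.log2_lt_pow2 _ _ (Nat.lt_0_succ _)) => h.
move/ssrnat.leP: Ln; lia.
Qed.

Lemma testbit_sub_pow (y i l : nat) : Nat.testbit y i = true ->
  Nat.testbit (y - 2 ^ i)%N l = xorb (Nat.testbit y l) (Nat.eqb i l).
Proof.
move=> yi.
have E : (y - 2 ^ i)%N = Nat.lxor y (Nat.pow 2 i).
  have H0 : Nat.land (Nat.lxor y (Nat.pow 2 i)) (Nat.pow 2 i) = 0%N.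
    apply: Nat.bits_inj => n; rewrite Nat.land_spec Nat.lxor_spec Nat.pow2_bits_eqb Nat.bits_0.
    by case: (Nat.eqb_spec i n) => [<-|]; [rewrite yi | rewrite !andbF].
  have := Nat.add_nocarry_lxor _ _ H0.
  rewrite Nat.lxor_assoc Nat.lxor_nilpotent Nat.lxor_0_r => h.
  by rewrite expn_pow -minusE; lia.
by rewrite E Nat.lxor_spec Nat.pow2_bits_eqb.
Qed.

Lemma testbit_ge (y i : nat) : Nat.testbit y i = true -> (2 ^ i <= y)%N.
Proof.
move=> yi; rewrite expn_pow; apply/ssrnat.leP.
case: (Nat.le_gt_cases (Nat.pow 2 i) y) => // h.
by rewrite Nat.testbit_eqb Nat.div_small // in yi.
Qed.

Section Fer.
Variable R : realType.
Local Notation C := (R[i]).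
Variable L : nat.
Local Notation n := (2 ^ L)%N.
Local Notation mat := (mat R L).
Local Notation adj := (@adj R).
Local Notation Jphi := (@Jphi R L).
Local Notation fop := (@fop R L).
Local Notation word_prod := (@word_prod R L).

Lemma adjK m p (M : 'M[C]_(m, p)) : adj (adj M) = M.
Proof. by apply/matrixP => i j; rewrite /adj !mxE conjCK. Qed.

Lemma adj_mul m p q (A : 'M[C]_(m, p)) (B : 'M[C]_(p, q)) :
  adj (A *m B) = adj B *m adj A.
Proof. by rewrite /adj map_mxM trmx_mul. Qed.

Lemma adjD m p (A B : 'M[C]_(m, p)) : adj (A + B) = adj A + adj B.
Proof. by apply/matrixP => i j; rewrite /adj !mxE rmorphD. Qed.

Lemma adjZ m p c (A : 'M[C]_(m, p)) : adj (c *: A) = c^* *: adj A.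
Proof. by apply/matrixP => i j; rewrite /adj !mxE rmorphM. Qed.

Lemma adj1 : adj (1%:M : mat) = 1%:M.
Proof. by apply/matrixP => i j; rewrite /adj !mxE eq_sym; case: eqP => _; rewrite ?rmorph1 ?rmorph0. Qed.

Lemma adjE m p (A : 'M[C]_(m, p)) i j : adj A i j = (A j i)^*.
Proof. by rewrite /adj !mxE. Qed.

Definition qf (v : 'cV[C]_n) (M : mat) := (adj v *m M *m v) 0 0.

Lemma qfD v A B : qf v (A + B) = qf v A + qf v B.
Proof. by rewrite /qf mulmxDr mulmxDl mxE. Qed.

Lemma qfN v A : qf v (- A) = - qf v A.
Proof. by rewrite /qf mulmxN mulNmx mxE. Qed.

Lemma qfB v A B : qf v (A - B) = qf v A - qf v B.
Proof. by rewrite qfD qfN. Qed.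

Lemma qfZ v c A : qf v (c *: A) = c * qf v A.
Proof. by rewrite /qf -scalemxAr -scalemxAl mxE. Qed.

Lemma qf0 v : qf v 0 = 0.
Proof. by rewrite /qf mulmx0 mul0mx mxE. Qed.

Lemma qf_sum I (r : seq I) P (F : I -> mat) v :
  qf v (\sum_(i <- r | P i) F i) = \sum_(i <- r | P i) qf v (F i).
Proof.
elim/big_rec2: _ => [|i y M _ <-]; first exact: qf0.
by rewrite qfD.
Qed.

Lemma gram_ge0 m (K : 'M[C]_(m, n)) v : 0 <= qf v (adj K *m K).
Proof.
rewrite /qf mulmxA -adj_mul -mulmxA mxE.
apply: sumr_ge0 => j _; rewrite adjE mulrC; exact: mul_conjC_ge0.
Qed.


Lemma occE l (k : 'I_n) : occ l k = Nat.testbit k l.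
Proof. by rewrite /occ odd_testbit. Qed.

Local Notation sp := (@state_parity L).

Lemma sp_sub (i : 'I_L) (x y : 'I_n) : Nat.testbit y i -> val x = (y - 2 ^ i)%N ->
  sp x = ~~ sp y.
Proof.
move=> yi xE; rewrite /state_parity (bigD1 i) //= [X in _ = ~~ odd X](bigD1 i) //=.
have -> : \sum_(l < L | l != i) occ l x = \sum_(l < L | l != i) occ l y.
  apply: eq_bigr => l li; rewrite !occE xE testbit_sub_pow //.
  by case: (Nat.eqb_spec i l) => [/val_inj/eqP|]; [rewrite eq_sym (negbTE li) | case: (Nat.testbit _ _)].
rewrite !occE xE testbit_sub_pow // yi Nat.eqb_refl /= !oddD /=.
by case: (odd _).
Qed.

Lemma Jphi_supp (i : 'I_L) (x y : 'I_n) : Jphi i x y != 0 ->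
  Nat.testbit y i /\ val x = (y - 2 ^ i)%N.
Proof.
rewrite /Jphi mxE; case: ifP => [/andP [/eqP h /eqP e] _|]; last by rewrite eqxx.
by split => //; move: h; rewrite occE; case: (Nat.testbit _ _).
Qed.

Lemma fop_supp a (x y : 'I_n) : fop a x y != 0 -> sp x = ~~ sp y.
Proof.
rewrite /fop; case: a.2.
- rewrite adjE conjC_eq0 => /Jphi_supp [h e].
  by rewrite (sp_sub _ _ _ h e) negbK.
- by move/Jphi_supp => [h e]; rewrite (sp_sub _ _ _ h e).
Qed.

Lemma mulmx_supp m p q (A : 'M[C]_(m, p)) (B : 'M[C]_(p, q)) x y :
  (A *m B) x y != 0 -> exists z, A x z != 0 /\ B z y != 0.
Proof.
rewrite mxE => H.
have /existsP [z /andP hz] : [exists z, (A x z != 0) && (B z y != 0)].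
  rewrite -[X in is_true X]negbK negb_exists; apply: contra H => /forallP Hz.
  apply/eqP; apply: big1 => z _.
  by move: (Hz z); rewrite negb_and !negbK => /orP [] /eqP ->; rewrite ?mul0r ?mulr0.
by exists z.
Qed.

Lemma word_supp w (x y : 'I_n) : word_prod w x y != 0 ->
  sp x = sp y (+) odd (size w).
Proof.
elim: w x => [|a w IH] x /=.
  by rewrite mxE addbF; case: (eqVneq x y) => [-> //|_]; rewrite mulr0n eqxx.
move/mulmx_supp => [z [h1 h2]].
by rewrite (fop_supp _ _ _ h1) (IH _ h2); case: (sp y); case: (odd _).
Qed.

Lemma sum_seq_neq0 (T : eqType) (s : seq T) (F : T -> C) :
  \sum_(p <- s) F p != 0 -> exists2 p, p \in s & F p != 0.
Proof.
move=> H; have /hasP [p ps hp] : has (fun p => F p != 0) s.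
  apply: contraR H => /hasPn Hn; rewrite big_seq big1 // => p /Hn.
  by rewrite negbK => /eqP.
by exists p.
Qed.

Lemma parity_supp b (A : mat) (x y : 'I_n) : parity_op b A -> A x y != 0 ->
  sp x = sp y (+) b.
Proof.
move=> [s [/allP hs ->]]; rewrite summxE => H.
have [p ps hp] : exists2 p, p \in s & (p.1 *: word_prod p.2) x y != 0.
  by apply: sum_seq_neq0.
move: hp; rewrite mxE mulf_eq0 negb_or => /andP [_ /word_supp ->].
by rewrite (eqP (hs p ps)).
Qed.

Lemma word_cat w1 w2 : word_prod (w1 ++ w2) = word_prod w1 *m word_prod w2.
Proof.
elim: w1 => [|a w IH] /=; first by rewrite mul1mx.
by rewrite IH mulmxA.
Qed.

Lemma po0 b : parity_op b (0 : mat).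
Proof. by exists [::]; rewrite big_nil. Qed.

Lemma poD b (A B : mat) : parity_op b A -> parity_op b B -> parity_op b (A + B).
Proof.
move=> [s1 [h1 ->]] [s2 [h2 ->]]; exists (s1 ++ s2).
by rewrite all_cat h1 h2 big_cat.
Qed.

Lemma poZ b c (A : mat) : parity_op b A -> parity_op b (c *: A).
Proof.
move=> [s [h ->]]; exists [seq (c * p.1, p.2) | p <- s]; split.
  by rewrite all_map; apply: sub_all h => p.
by rewrite big_map scaler_sumr; apply: eq_bigr => p _; rewrite scalerA.
Qed.

Lemma poN b (A : mat) : parity_op b A -> parity_op b (- A).
Proof. by move=> h; rewrite -scaleN1r; apply: poZ. Qed.

Lemma poB b (A B : mat) : parity_op b A -> parity_op b B -> parity_op b (A - B).
Proof. by move=> h1 h2; apply: poD => //; apply: poN. Qed.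

Lemma po_sum b I (r : seq I) (P : pred I) (F : I -> mat) :
  (forall i, P i -> parity_op b (F i)) -> parity_op b (\sum_(i <- r | P i) F i).
Proof. by move=> h; apply: big_ind => //; [apply: po0 | apply: poD]. Qed.

Lemma poW w : parity_op (odd (size w)) (word_prod w).
Proof. by exists [:: (1, w)]; rewrite /= eqxx big_seq1 scale1r. Qed.

Lemma po1 : parity_op false (1%:M : mat).
Proof. exact: (poW [::]). Qed.

Lemma poM b c (A B : mat) : parity_op b A -> parity_op c B -> parity_op (b (+) c) (A *m B).
Proof.
move=> [s1 [h1 ->]] [s2 [h2 ->]].
rewrite mulmx_suml big_seq; apply: po_sum => p ps.
rewrite mulmx_sumr big_seq; apply: po_sum => q qs.
rewrite -scalemxAl -scalemxAr scalerA -word_cat; apply: poZ.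
have := poW (p.2 ++ q.2); rewrite size_cat oddD.
by rewrite (eqP (allP h1 p ps)) (eqP (allP h2 q qs)).
Qed.

Lemma poF a : parity_op true (fop a).
Proof. have := poW [:: a]; by rewrite /= mulmx1. Qed.


Definition sgn (i : 'I_L) (y : 'I_n) : C := (-1) ^+ (\sum_(l < L | (l < i)%N) occ l y).

Lemma sgn_neq0 i y : sgn i y != 0.
Proof. by rewrite /sgn signr_eq0. Qed.

Lemma sgnK i y : (sgn i y)^* * sgn i y = 1.
Proof. by rewrite /sgn rmorph_sign -expr2 sqrr_sign. Qed.

Lemma JphiE (i : 'I_L) (x y : 'I_n) :
  Jphi i x y = if Nat.testbit y i && (val x == y - 2 ^ i)%N then sgn i y else 0.
Proof.
rewrite /Jphi mxE occE.
by case: (Nat.testbit _ _).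
Qed.

Lemma mulmx_diagl (A B : mat) z w : (forall u, u != z -> A z u = 0) ->
  (A *m B) z w = A z z * B z w.
Proof.
move=> h; rewrite mxE (bigD1 z) //= big1 ?addr0 // => u uz.
by rewrite h ?mul0r.
Qed.

Lemma mulmx_single m p q (A : 'M[C]_(m, p)) (B : 'M[C]_(p, q)) z w u0 : (forall u, u != u0 -> A z u * B u w = 0) ->
  (A *m B) z w = A z u0 * B u0 w.
Proof.
by move=> h; rewrite mxE (bigD1 u0) //= big1 ?addr0.
Qed.

Lemma testbit_ltn (y : 'I_n) (i : 'I_L) : (y - 2 ^ i < n)%N.
Proof. exact: leq_ltn_trans (leq_subr _ _) (ltn_ord y). Qed.

Lemma sub_inj (i : nat) (a b : nat) : Nat.testbit a i -> Nat.testbit b i ->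
  (a - 2 ^ i)%N = (b - 2 ^ i)%N -> a = b.
Proof.
move=> /testbit_ge ha /testbit_ge hb e.
by rewrite -(subnK ha) e subnK.
Qed.

Definition Nop (i : 'I_L) : mat := adj (Jphi i) *m Jphi i.

Lemma NopE i (x y : 'I_n) : Nop i x y = ((x == y) && Nat.testbit x i)%:R.
Proof.
case hx: (Nat.testbit x i); last first.
  rewrite andbF /Nop mxE big1 // => z _; rewrite adjE JphiE hx /= rmorph0 mul0r //.
pose z0 : 'I_n := Ordinal (testbit_ltn x i).
rewrite /Nop (mulmx_single _ _ _ _ _ _ _ z0); last first.
  move=> u uz; rewrite adjE JphiE hx /=.
  case: eqP => [e|]; last by rewrite rmorph0 mul0r.
  by case/eqP: uz; apply: val_inj.
rewrite adjE !JphiE hx eqxx /=.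
case: (eqVneq x y) => [<-|xy]; first by rewrite hx eqxx sgnK.
case hy: (Nat.testbit y i) => /=; last by rewrite mulr0.
case: eqP => [e|]; last by rewrite mulr0.
by case/eqP: xy; apply: val_inj; apply: (sub_inj _ _ _ hx hy).
Qed.

Definition Pz (i : 'I_L) : mat := 1%:M - Nop i.

Lemma PzE i (x y : 'I_n) : Pz i x y = ((x == y) && ~~ Nat.testbit x i)%:R.
Proof.
rewrite /Pz mxE [X in _ + X]mxE NopE mxE.
by case: eqP => _ /=; case: (Nat.testbit _ _); rewrite ?subr0 ?subrr.
Qed.

Lemma Pz_even i : parity_op false (Pz i).
Proof.
apply: poB; first exact: po1.
exact: (poM _ _ _ _ (poF (i, true)) (poF (i, false))).
Qed.


Definition Vs (s : seq 'I_L) : mat := foldr (fun i M => Pz i *m M) 1%:M s.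

Lemma VsE s (z w : 'I_n) :
  Vs s z w = ((z == w) && all (fun i : 'I_L => ~~ Nat.testbit z i) s)%:R.
Proof.
elim: s => [|i s IH] /=; first by rewrite mxE andbT.
rewrite mulmx_diagl; last by move=> u uz; rewrite PzE eq_sym (negbTE uz).
rewrite PzE IH eqxx /= -natrM mulnb.
by case: (z == w); case: (Nat.testbit _ _); rewrite ?andbF.
Qed.

Lemma n_gt0 : (0 < n)%N.
Proof. by rewrite expn_gt0. Qed.

Definition o0 : 'I_n := Ordinal n_gt0.

Lemma eq_o0 (z : 'I_n) : (z == o0) = all (fun i : 'I_L => ~~ Nat.testbit z i) (enum 'I_L).
Proof.
apply/idP/idP => [/eqP e|/allP h]; first by subst z; apply/allP => i _ /=; rewrite Nat.bits_0.
apply/eqP; apply: val_inj => /=; apply: (bits_zero _ _ (ltn_ord z)) => j jL.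
by apply/negbTE; apply: (h (Ordinal jL)); rewrite mem_enum.
Qed.

Lemma V_delta : Vs (enum 'I_L) = delta_mx o0 o0.
Proof.
apply/matrixP => z w; rewrite VsE !mxE -eq_o0.
by case: (eqVneq z o0) => [->|_]; rewrite ?andbF // andbT eq_sym.
Qed.

Lemma dE m p (i a : 'I_m) (j b : 'I_p) : (delta_mx i j : 'M[C]_(m, p)) a b = ((a == i) && (b == j))%:R.
Proof. by rewrite mxE. Qed.

Lemma scE m p c (M : 'M[C]_(m, p)) a b : (c *: M) a b = c * M a b.
Proof. by rewrite mxE. Qed.

Lemma adjJ_delta (i : 'I_L) (x x' u : 'I_n) : Nat.testbit x i -> val x' = (x - 2 ^ i)%N ->
  adj (Jphi i) *m delta_mx x' u = (Jphi i x' x)^* *: delta_mx x u.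
Proof.
move=> hx ex; apply/matrixP => a b.
rewrite (mulmx_single _ _ _ _ _ _ _ x'); last by move=> v vx; rewrite dE (negbTE vx) mulr0.
rewrite scE !dE adjE eqxx /= !JphiE hx ex eqxx /=.
case: (eqVneq a x) => [->|ax]; first by rewrite eqxx /= hx.
case ha: (Nat.testbit a i) => /=; last by rewrite rmorph0 mul0r mulr0.
case: eqP => [e|]; last by rewrite rmorph0 mul0r mulr0.
by case/eqP: ax; apply: val_inj; apply: (sub_inj _ _ _ ha hx); rewrite e.
Qed.

Lemma delta_J (i : 'I_L) (y y' u : 'I_n) : Nat.testbit y i -> val y' = (y - 2 ^ i)%N ->
  delta_mx u y' *m Jphi i = Jphi i y' y *: delta_mx u y.
Proof.
move=> hy ey; apply/matrixP => a b.
rewrite (mulmx_single _ _ _ _ _ _ _ y'); last by move=> v vy; rewrite dE (negbTE vy) andbF mul0r.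
rewrite scE !dE eqxx andbT !JphiE hy ey eqxx /=.
case: (eqVneq b y) => [->|yb]; first by rewrite hy !andbT /= eqxx mulrC.
rewrite andbF mulr0n mulr0.
case hb: (Nat.testbit b i) => /=; last by rewrite mulr0.
case: (a == u); rewrite ?mul0r // mul1r.
case: eqP => [e|]; last by [].
by case/eqP: yb; apply: val_inj; apply: (sub_inj _ _ _ hb hy); rewrite e.
Qed.

Lemma exists_bit (x : 'I_n) : x != o0 -> exists i : 'I_L, Nat.testbit x i.
Proof.
rewrite eq_o0 => /allPn [i _]; rewrite negbK => h; by exists i.
Qed.

Lemma ltn_sub_bit (x : 'I_n) (i : 'I_L) : Nat.testbit x i -> (x - 2 ^ i < x)%N.
Proof.
move=> /testbit_ge h; rewrite ltn_subrL expn_gt0 /=.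
exact: leq_trans (expn_gt0 2 i) h.
Qed.

Lemma Vs_even s : parity_op false (Vs s).
Proof.
elim: s => [|i s IH] /=; first exact: po1.
exact: (poM _ _ _ _ (Pz_even i) IH).
Qed.

Lemma delta_x0 (x : 'I_n) : exists b, parity_op b (delta_mx x o0 : mat).
Proof.
move: {2}(val x) (erefl (val x)) => k; elim/ltn_ind: k x => k IH x ek.
case: (eqVneq x o0) => [->|xo].
  by exists false; rewrite -V_delta; apply: Vs_even.
have [i hi] := exists_bit _ xo.
pose x' : 'I_n := Ordinal (testbit_ltn x i).
have hlt : (val x' < k)%N by rewrite -ek; exact: (ltn_sub_bit _ _ hi).
have [b hb] := IH _ hlt x' erefl.
have hJ := adjJ_delta i x x' o0 hi (erefl (val x')).
exists (true (+) b).
have -> : (delta_mx x o0 : mat) = ((Jphi i x' x)^*)^-1 *: (adj (Jphi i) *m delta_mx x' o0).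
  by rewrite hJ scalerA mulVf ?scale1r // conjC_eq0 JphiE hi eqxx sgn_neq0.
by apply: poZ; apply: (poM _ _ _ _ (poF (i, true)) hb).
Qed.

Lemma delta_0y (y : 'I_n) : exists b, parity_op b (delta_mx o0 y : mat).
Proof.
move: {2}(val y) (erefl (val y)) => k; elim/ltn_ind: k y => k IH y ek.
case: (eqVneq y o0) => [->|yo].
  by exists false; rewrite -V_delta; apply: Vs_even.
have [i hi] := exists_bit _ yo.
pose y' : 'I_n := Ordinal (testbit_ltn y i).
have hlt : (val y' < k)%N by rewrite -ek; exact: (ltn_sub_bit _ _ hi).
have [b hb] := IH _ hlt y' erefl.
have hJ := delta_J i y y' o0 hi (erefl (val y')).
exists (b (+) true).
have -> : (delta_mx o0 y : mat) = (Jphi i y' y)^-1 *: (delta_mx o0 y' *m Jphi i).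
  by rewrite hJ scalerA mulVf ?scale1r // JphiE hi eqxx sgn_neq0.
by apply: poZ; apply: (poM _ _ _ _ hb (poF (i, false))).
Qed.

Lemma delta_po (x y : 'I_n) : parity_op (sp x (+) sp y) (delta_mx x y : mat).
Proof.
have [b1 h1] := delta_x0 x; have [b2 h2] := delta_0y y.
have h := poM _ _ _ _ h1 h2; rewrite mul_delta_mx in h.
suff <- : b1 (+) b2 = sp x (+) sp y by [].
have := parity_supp _ _ x y h; rewrite mxE !eqxx /= oner_eq0 => /(_ isT) ->.
by case: (sp y); case: (b1 (+) b2).
Qed.

Lemma complete b (M : mat) : (forall x y, M x y != 0 -> sp x = sp y (+) b) -> parity_op b M.
Proof.
move=> h; rewrite (matrix_sum_delta M); apply: po_sum => x _; apply: po_sum => y _.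
case: (eqVneq (M x y) 0) => [->|nz]; first by rewrite scale0r; apply: po0.
apply: poZ; have := delta_po x y; rewrite (h _ _ nz).
by have -> : sp y (+) b (+) sp y = b by case: (sp y); case: (b).
Qed.


Definition bf (u w : 'cV[C]_n) (M : mat) := (adj u *m M *m w) 0 0.

Lemma bfDl u1 u2 w M : bf (u1 + u2) w M = bf u1 w M + bf u2 w M.
Proof. by rewrite /bf adjD !mulmxDl mxE. Qed.
Lemma bfDr u w1 w2 M : bf u (w1 + w2) M = bf u w1 M + bf u w2 M.
Proof. by rewrite /bf mulmxDr mxE. Qed.
Lemma bfZl c u w M : bf (c *: u) w M = c^* * bf u w M.
Proof. by rewrite /bf adjZ -!scalemxAl mxE. Qed.
Lemma bfZr c u w M : bf u (c *: w) M = c * bf u w M.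
Proof. by rewrite /bf -scalemxAr mxE. Qed.
Lemma bf_delta (x y : 'I_n) M : bf (delta_mx x 0) (delta_mx y 0) M = M x y.
Proof.
rewrite /bf (mulmx_single _ _ _ _ _ _ _ y); last first.
  by move=> u uy; rewrite dE (negbTE uy) mulr0.
rewrite dE !eqxx mulr1 mxE (bigD1 x) //= big1 ?addr0.
  by rewrite adjE dE !eqxx rmorph1 mul1r.
by move=> u ux; rewrite adjE dE (negbTE ux) rmorph0 mul0r.
Qed.

Lemma qf_bf v M : qf v M = bf v v M.
Proof. by []. Qed.

Lemma psd_herm (M : mat) : psd M -> adj M = M.
Proof.
move=> hM; apply/matrixP => x y; rewrite adjE.
have real v : (qf v M)^* = qf v M by apply: geC0_conj; apply: hM.
pose ex : 'cV[C]_n := delta_mx x 0; pose ey : 'cV[C]_n := delta_mx y 0.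
have E c : qf (ex + c *: ey) M = M x x + c * M x y + c^* * M y x + c^* * c * M y y.
  rewrite qf_bf bfDl !bfDr !bfZl !bfZr !bf_delta.
  by rewrite addrA mulrA.
have r0 := real ex; rewrite qf_bf bf_delta in r0.
have r1 := real ey; rewrite qf_bf bf_delta in r1.
have h1 := real (ex + 1 *: ey); rewrite E in h1.
have h2 := real (ex + 'i *: ey); rewrite E in h2.
rewrite !rmorphD !rmorphM !rmorph1 !mul1r /= r0 r1 in h1.
rewrite !rmorphD !rmorphM /= !conjCK r0 r1 in h2.
move: h1 h2; set a := M x y; set b := M y x; set d1 := M x x; set d2 := M y y.
move/eqP; rewrite -subr_eq0 => /eqP e1.
move/eqP; rewrite -subr_eq0 conjCi => /eqP e2.
have i2 : 1 + 'i ^+ 2 = 0 :> C by rewrite sqrCi subrr.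
have two : (2 : C) != 0 by rewrite pnatr_eq0.
apply/eqP; rewrite -subr_eq0 -(mulrI_eq0 _ (lregP two)); apply/eqP.
have -> : 2 * (b^* - a) = (d1 + a^* + b^* + d2 - (d1 + a + b + d2))
   - 'i * (d1 + - 'i * a^* + 'i * b^* + 'i * - 'i * d2 - (d1 + 'i * a + - 'i * b + - 'i * 'i * d2))
   - (1 + 'i ^+ 2) * (a^* - b^* + a - b) by ring.
by rewrite e1 e2 i2 !mul0r mulr0 !subr0.
Qed.


Lemma tr1 (M : 'M[C]_1) : \tr M = M 0 0.
Proof. by rewrite /mxtrace big_ord1. Qed.

Lemma tr_kraus (Ks : seq mat) (X : mat) :
  \tr (\sum_(K <- Ks) K *m X *m adj K) = \tr (X *m \sum_(K <- Ks) adj K *m K).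
Proof.
rewrite mulmx_sumr !raddf_sum; apply: eq_bigr => K _.
by rewrite /= mxtrace_mulC [in RHS]mxtrace_mulC !mulmxA.
Qed.

Lemma psd_sum I (r : seq I) (P : pred I) (F : I -> mat) :
  (forall i, P i -> psd (F i)) -> psd (\sum_(i <- r | P i) F i).
Proof.
move=> h v; rewrite -/(qf v _) qf_sum; apply: sumr_ge0 => i Pi; exact: h.
Qed.

Lemma psd_gram (K : mat) : psd (adj K *m K).
Proof. move=> v; exact: gram_ge0. Qed.

Definition pres (M : mat) := forall x y, M x y != 0 -> sp x = sp y.

Lemma pres_even (M : mat) : parity_op false M -> pres M.
Proof. by move=> h x y nz; rewrite (parity_supp _ _ x y h nz) addbF. Qed.

Lemma even_pres (M : mat) : pres M -> parity_op false M.
Proof. by move=> h; apply: complete => x y /h ->; rewrite addbF. Qed.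

Lemma gram_pres b (K : mat) : parity_op b K -> pres (adj K *m K).
Proof.
move=> hK x y /mulmx_supp [z [h1 h2]].
rewrite adjE conjC_eq0 in h1.
have := parity_supp _ _ _ _ hK h1; have := parity_supp _ _ _ _ hK h2.
by move=> -> /eqP; rewrite eq_sym => /eqP; case: (sp x); case: (sp y); case: (b).
Qed.

Lemma pres_sum (Ks : seq mat) (F : mat -> mat) :
  (forall K, K \in Ks -> pres (F K)) -> pres (\sum_(K <- Ks) F K).
Proof.
move=> h x y; rewrite summxE => /sum_seq_neq0 [K KK]; exact: h.
Qed.

Lemma part1 (A : mat) : fermionic_effect A ->
  exists E : mat,
    [/\ even_op E, psd E, psd (1%:M - E)
      & forall rho, fermionic_state rho -> \tr (rho *m A) = \tr (rho *m E)].
Proof.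
move=> [T [[Ks [hK hpsd hT]] htr]].
exists (\sum_(K <- Ks) adj K *m K); split => //.
- apply: even_pres; apply: pres_sum => K /hK [] h; exact: gram_pres h.
- by apply: psd_sum => K _; apply: psd_gram.
- by move=> rho hrho; rewrite htr // hT tr_kraus.
Qed.


Lemma qfE v M : qf v M = \sum_a \sum_b (v a 0)^* * M a b * v b 0.
Proof.
rewrite /qf mxE exchange_big /=; apply: eq_bigr => b _.
rewrite mxE mulr_suml; apply: eq_bigr => a _.
by rewrite adjE.
Qed.

Definition proj (p : bool) (v : 'cV[C]_n) : 'cV[C]_n :=
  \matrix_(x, j) (if sp x == p then v x j else 0).

Lemma qf_split v M : pres M -> qf v M = qf (proj true v) M + qf (proj false v) M.
Proof.
move=> hM; rewrite !qfE -big_split; apply: eq_bigr => a _.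
rewrite -big_split; apply: eq_bigr => b _ /=.
rewrite !mxE.
case: (eqVneq (M a b) 0) => [->|nz]; first by rewrite !mulr0 !mul0r addr0.
rewrite (hM _ _ nz).
by case: (sp b); rewrite /= ?rmorph0 ?mul0r ?mulr0 ?addr0 ?add0r.
Qed.

Lemma rank1_state (v : 'cV[C]_n) p : (forall x, v x 0 != 0 -> sp x = p) ->
  exists eps : C, eps != 0 /\ fermionic_state (eps *: (v *m adj v)).
Proof.
move=> hv.
have entry x y : (v *m adj v) x y = v x 0 * (v y 0)^*.
  by rewrite mxE big_ord1 adjE.
pose s := \tr (v *m adj v).
have s_ge0 : 0 <= s.
  rewrite /s mxtrace_mulC tr1.
  have := gram_ge0 _ (1%:M : mat) v; by rewrite /qf adj1 mulmx1 mulmx1.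
have pos : 0 < 1 + s by apply: ltr_wpDr.
exists (1 + s)^-1; split; first by rewrite invr_eq0 lt0r_neq0.
have eps_ge0 : 0 <= (1 + s)^-1 by rewrite invr_ge0 ltW.
split.
- apply: poZ; apply: even_pres => x y; rewrite entry mulf_eq0 negb_or conjC_eq0.
  by move=> /andP [/hv -> /hv ->].
- move=> u; rewrite -/(qf u _) qfZ; apply: mulr_ge0 => //.
  by rewrite -{1}(adjK _ _ v); apply: gram_ge0.
- move=> x y nxy; rewrite scE entry.
  case: (eqVneq (v x 0) 0) => [->|nx]; first by rewrite mul0r mulr0.
  case: (eqVneq (v y 0) 0) => [->|ny]; first by rewrite rmorph0 !mulr0.
  by move: nxy; rewrite (hv _ nx) (hv _ ny) eqxx.
- rewrite mxtraceZ -/s mulrC ler_pdivrMr // mul1r.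
  by rewrite lerDr.
Qed.

Lemma state_qf (v : 'cV[C]_n) p (A E : mat) : (forall x, v x 0 != 0 -> sp x = p) ->
  (forall rho, fermionic_state rho -> \tr (rho *m A) = \tr (rho *m E)) ->
  qf v A = qf v E.
Proof.
move=> hv h; have [eps [e0 hst]] := rank1_state _ _ hv.
have := h _ hst; rewrite -!scalemxAl !mxtraceZ.
rewrite -!mulmxA [in LHS]mxtrace_mulC [in RHS]mxtrace_mulC !tr1.
by move/(mulfI e0).
Qed.

Lemma proj_pure p v x : proj p v x 0 != 0 -> sp x = p.
Proof. by rewrite mxE; case: (sp x =P p) => // _; rewrite eqxx. Qed.

Lemma part2 (A : mat) : even_op A -> fermionic_effect A -> psd A /\ psd (1%:M - A).
Proof.
move=> hA /part1 [E [hE pE pE1 htr]].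
have hAp := pres_even _ hA; have hEp := pres_even _ hE.
have key v : qf v A = qf v E.
  rewrite (qf_split _ _ hAp) (qf_split _ _ hEp).
  by rewrite (state_qf _ _ _ _ (proj_pure true v) htr) (state_qf _ _ _ _ (proj_pure false v) htr).
split => v; rewrite -/(qf v _).
- rewrite key; exact: pE.
- by rewrite qfB key -qfB; exact: pE1.
Qed.


Lemma tstar_adj m p (M : 'M[C]_(m, p)) : map_mx Num.conj (M^T) = adj M.
Proof. by rewrite /adj map_trmx. Qed.

Lemma adj_diag (r : 'rV[C]_n) : adj (diag_mx r) = diag_mx (map_mx Num.conj r).
Proof.
apply/matrixP => i j; rewrite adjE !mxE eq_sym.
by case: eqP => [->|]; rewrite ?mulr1n ?mulr0n ?rmorph0.
Qed.

Lemma psd_factor (A : mat) : psd A -> exists B : mat, adj B *m B = A.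
Proof.
move=> hA; have hh := psd_herm _ hA.
have nA : A \is normalmx by apply/normalmxP; rewrite tstar_adj hh.
have /orthomx_spectralP eA := nA.
set P := spectralmx A in eA; set d := spectral_diag A in eA.
have uP : P \is unitarymx by apply: spectral_unitarymx.
have PP : P *m adj P = 1%:M by rewrite -tstar_adj; apply/unitarymxP.
rewrite invmx_unitary // tstar_adj in eA.
have D : P *m A *m adj P = diag_mx d.
  by rewrite eA !mulmxA PP mul1mx -mulmxA PP mulmx1.
have dge0 j : 0 <= d 0 j.
  pose e : 'cV[C]_n := delta_mx j 0.
  move: (hA (adj P *m e)).
  have -> : adj (adj P *m e) *m A *m (adj P *m e) =
    adj e *m (P *m A *m adj P) *m e by rewrite adj_mul adjK !mulmxA.
  rewrite D; have := bf_delta j j (diag_mx d); rewrite /bf => ->.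
  by rewrite mxE eqxx mulr1n.
exists (diag_mx (\row_j sqrtC (d 0 j)) *m P).
rewrite adj_mul adj_diag mulmxA -(mulmxA (adj P)).
have -> : diag_mx (map_mx Num.conj (\row_j sqrtC (d 0 j))) *m diag_mx (\row_j sqrtC (d 0 j)) = diag_mx d.
  apply/matrixP => a b; rewrite mul_diag_mx !mxE.
  case: (eqVneq a b) => [->|ab]; last by rewrite !mulr0n mulr0.
  rewrite !mulr1n geC0_conj ?sqrtC_ge0 // -expr2 sqrtCK.
  by [].
by rewrite eA.
Qed.


Definition Pi (p : bool) : mat := diag_mx (\row_x ((sp x == p)%:R)).

Lemma PiE p (x y : 'I_n) : Pi p x y = ((x == y) && (sp x == p))%:R.
Proof. by rewrite !mxE; case: (x == y); case: (sp x == p). Qed.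

Lemma adjPi p : adj (Pi p) = Pi p.
Proof.
apply/matrixP => x y; rewrite adjE !PiE eq_sym.
case: (eqVneq x y) => [->|_] /=; last by rewrite rmorph0.
by case: (sp y == p); rewrite ?rmorph1 ?rmorph0.
Qed.

Lemma PiPi p : Pi p *m Pi p = Pi p.
Proof.
apply/matrixP => x y; rewrite mulmx_diagl; last by move=> u ux; rewrite (PiE p x u) eq_sym (negbTE ux).
rewrite !PiE eqxx /= -natrM mulnb.
by case: (x == y); case: (sp x == p).
Qed.

Lemma Pi_sum : Pi true + Pi false = 1%:M.
Proof.
apply/matrixP => x y; rewrite [LHS]mxE !PiE mxE.
by case: (x == y); case: (sp x); rewrite /= ?addr0 ?add0r.
Qed.

Lemma PiAPiE p q (A : mat) x y : (Pi p *m A *m Pi q) x y = ((sp x == p) && (sp y == q))%:R * A x y.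
Proof.
rewrite /Pi mul_mx_diag mul_diag_mx !mxE.
by case: (sp x == p); case: (sp y == q); rewrite ?mul1r ?mulr1 ?mul0r ?mulr0.
Qed.

Lemma Pi_conj (A : mat) : pres A -> Pi true *m A *m Pi true + Pi false *m A *m Pi false = A.
Proof.
move=> hA; apply/matrixP => x y; rewrite [LHS]mxE !PiAPiE.
case: (eqVneq (A x y) 0) => [->|nz]; first by rewrite !mulr0 addr0.
rewrite (hA _ _ nz).
by case: (sp y); rewrite /= ?mul1r ?mul0r ?addr0 ?add0r.
Qed.

Definition Kr (B : mat) p q : mat := Pi p *m B *m Pi q.

Lemma Kr_parity B p q : parity_op (p (+) q) (Kr B p q).
Proof.
apply: complete => x y; rewrite /Kr PiAPiE mulf_eq0 negb_or pnatr_eq0 eqb0 negbK.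
by move=> /andP [/andP [/eqP -> /eqP ->] _]; case: (p); case: (q).
Qed.

Lemma Kr_gram B p q : adj (Kr B p q) *m Kr B p q = Pi q *m (adj B *m Pi p *m B) *m Pi q.
Proof.
rewrite /Kr !adj_mul !adjPi !mulmxA.
by rewrite -[Pi q *m adj B *m Pi p *m Pi p]mulmxA PiPi.
Qed.

Lemma part3 (A : mat) : even_op A -> psd A -> psd (1%:M - A) -> fermionic_effect A.
Proof.
move=> hA pA pA1; have [B hB] := psd_factor _ pA.
pose Ks := [:: Kr B true true; Kr B false true; Kr B true false; Kr B false false].
have sumK : \sum_(K <- Ks) adj K *m K = A.
  have hq q : Pi q *m (adj B *m Pi true *m B) *m Pi q + Pi q *m (adj B *m Pi false *m B) *m Pi q
     = Pi q *m A *m Pi q.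
    by rewrite -mulmxDl -mulmxDr -mulmxDl -mulmxDr Pi_sum mulmx1 hB.
  rewrite !big_cons big_nil addr0 !Kr_gram addrA hq hq.
  exact: Pi_conj (pres_even _ hA).
exists (fun X => \sum_(K <- Ks) K *m X *m adj K); split.
  exists Ks; split => //; last by rewrite sumK.
  move=> K; rewrite !inE => /or4P [] /eqP ->.
  - by left; exact: (Kr_parity B true true).
  - by right; exact: (Kr_parity B false true).
  - by right; exact: (Kr_parity B true false).
  - by left; exact: (Kr_parity B false false).
by move=> rho _; rewrite tr_kraus sumK.
Qed.

End Fer.

Theorem corollary1 (R : realType) (L : nat) :
  (* every fermionic effect is (as a functional on fermionic states) given by
     an even operator E with 0 <= J(E) <= I *)
  (forall A : mat R L, fermionic_effect A ->
     exists E : mat R L,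
       [/\ even_op E, psd E, psd (1%:M - E)
         & forall rho, fermionic_state rho -> \tr (rho *m A) = \tr (rho *m E)])
  (* an even fermionic effect itself satisfies 0 <= J(A) <= I *)
  /\ (forall A : mat R L, even_op A -> fermionic_effect A ->
        psd A /\ psd (1%:M - A))
  (* conversely, every even A with 0 <= J(A) <= I is a fermionic effect *)
  /\ (forall A : mat R L, even_op A -> psd A -> psd (1%:M - A) ->
        fermionic_effect A).
Proof.
split; first exact: (@part1 R L).
split; first exact: (@part2 R L).
exact: (@part3 R L).
Qed.
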